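(* Let $\mathsf{K}$ be a universal class of $\mathcal{L}$-algebras with parametrically definable principal congruences. If $\mathrm{Th}(\mathsf{K})$ has a model completion, then $\mathsf{K}$ has quantifier-free definable principal congruences.
   Context: $\mathcal{L}$ is an algebraic first-order language with at least one constant symbol. A universal class is closed under isomorphic images, subalgebras and ultraproducts. A model completion of a theory $T$ is a model complete theory $T^*$ with the same universal consequences as $T$ such that for every model $M$ of $T$, $T^*$ plus the diagram of $M$ is complete. $\mathrm{Cg}^{\mathbf{A}}(b_1,b_2)$ is the congruence of $\mathbf{A}$ generated by $(b_1,b_2)$. $\mathsf{K}$ has parametrically definable principal congruences if there is a quantifier-free formula $\xi(x_1,x_2,y_1,y_2,\overline{z})$ ($\overline{z}$ a finite set of variables) such that for every $\mathbf{A}\in\mathsf{K}$ and $a_1,a_2,b_1,b_2\in A$: $(a_1,a_2)\in\mathrm{Cg}^{\mathbf{A}}(b_1,b_2)$ iff every $\mathbf{B}\in\mathsf{K}$ extending $\mathbf{A}$ satisfies $\forall\overline{z}.\xi(a_1,a_2,b_1,b_2,\overline{z})$. $\mathsf{K}$ has quantifier-free definable principal congruences if there is a quantifier-free formula $\alpha(x_1,x_2,y_1,y_2)$ with $(a_1,a_2)\in\mathrm{Cg}^{\mathbf{A}}(b_1,b_2)$ iff $\mathbf{A}\models\alpha(a_1,a_2,b_1,b_2)$ for all $\mathbf{A}\in\mathsf{K}$ and $a_1,a_2,b_1,b_2\in A$. *)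

(* Defs.v *)
From mathcomp Require Import all_boot.
Set Implicit Arguments.
Unset Strict Implicit.
Unset Printing Implicit Defensive.

Record language := Language { sym : Type; arity : sym -> nat }.

Section FOL.
Variable L : language.

Record algebra := Algebra {
  carrier :> Type;
  op : forall f : sym L, ('I_(arity f) -> carrier) -> carrier }.
Arguments op {a} f args.

Inductive term : Type :=
  | Var : nat -> term
  | App : forall f : sym L, ('I_(arity f) -> term) -> term.
Arguments App f args.

Inductive formula : Type :=
  | FEq  : term -> term -> formula
  | FFalse : formula
  | FNot : formula -> formula
  | FAnd : formula -> formula -> formula
  | FOr  : formula -> formula -> formula
  | FImp : formula -> formula -> formula
  | FAll : nat -> formula -> formula
  | FEx  : nat -> formula -> formula.

Fixpoint term_occ (t : term) (n : nat) : Prop :=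
  match t with
  | Var m => m = n
  | App f args => exists k, term_occ (args k) n
  end.

Fixpoint free_var (phi : formula) (n : nat) : Prop :=
  match phi with
  | FEq t1 t2 => term_occ t1 n \/ term_occ t2 n
  | FFalse => False
  | FNot p => free_var p n
  | FAnd p q | FOr p q | FImp p q => free_var p n \/ free_var q n
  | FAll m p | FEx m p => n <> m /\ free_var p n
  end.

Definition sentence (phi : formula) : Prop := forall n, ~ free_var phi n.

Fixpoint qfree (phi : formula) : Prop :=
  match phi with
  | FEq _ _ | FFalse => True
  | FNot p => qfree p
  | FAnd p q | FOr p q | FImp p q => qfree p /\ qfree q
  | FAll _ _ | FEx _ _ => False
  end.

Inductive universal : formula -> Prop :=
  | univ_qf phi : qfree phi -> universal phi
  | univ_all n phi : universal phi -> universal (FAll n phi).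

Fixpoint teval (A : algebra) (v : nat -> A) (t : term) : A :=
  match t with
  | Var n => v n
  | App f args => op f (fun k => teval v (args k))
  end.

Definition upd (A : Type) (v : nat -> A) (n : nat) (a : A) : nat -> A :=
  fun m => if m == n then a else v m.

Fixpoint sat (A : algebra) (v : nat -> A) (phi : formula) : Prop :=
  match phi with
  | FEq t1 t2 => teval v t1 = teval v t2
  | FFalse => False
  | FNot p => ~ sat v p
  | FAnd p q => sat v p /\ sat v q
  | FOr p q => sat v p \/ sat v q
  | FImp p q => sat v p -> sat v q
  | FAll n p => forall a : A, sat (upd v n a) p
  | FEx n p => exists a : A, sat (upd v n a) p
  end.

(* Theories are sets of formulas; a model satisfies (the universal closure of)
   each of them. *)
Definition theory := formula -> Prop.
Definition model (T : theory) (A : algebra) : Prop :=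
  forall phi, T phi -> forall v : nat -> A, sat v phi.
Definition consequence (T : theory) (phi : formula) : Prop :=
  forall A : algebra, model T A -> forall v : nat -> A, sat v phi.

Definition hom (A B : algebra) (e : A -> B) : Prop :=
  forall f (args : 'I_(arity f) -> A), e (op f args) = op f (fun k => e (args k)).
Definition embedding (A B : algebra) (e : A -> B) : Prop :=
  hom e /\ injective e.
Definition isomorphism (A B : algebra) (e : A -> B) : Prop :=
  hom e /\ bijective e.

Definition class := algebra -> Prop.

Definition ultrafilter (I : Type) (U : (I -> Prop) -> Prop) : Prop :=
  [/\ U (fun _ => True),
      ~ U (fun _ => False),
      (forall S S' : I -> Prop, U S -> (forall i, S i -> S' i) -> U S'),
      (forall S S', U S -> U S' -> U (fun i => S i /\ S' i)) &
      (forall S, U S \/ U (fun i => ~ S i))].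

(* B is (isomorphic to) the ultraproduct of the family A modulo U: the
   canonical projection from the direct product onto B is a surjective
   homomorphism whose kernel is "equal on a U-large set". *)
Definition is_ultraproduct (I : Type) (A : I -> algebra)
    (U : (I -> Prop) -> Prop) (B : algebra) : Prop :=
  exists pi : (forall i, A i) -> B,
    [/\ (forall y : B, exists x, pi x = y),
        (forall x y, pi x = pi y <-> U (fun i => x i = y i)) &
        (forall f (args : 'I_(arity f) -> forall i, A i),
            pi (fun i => op f (fun k => args k i)) = op f (fun k => pi (args k)))].

Definition closed_iso (K : class) : Prop :=
  forall (A B : algebra) (e : A -> B), K A -> isomorphism e -> K B.
Definition closed_sub (K : class) : Prop :=
  forall (A B : algebra) (e : A -> B), K B -> embedding e -> K A.
Definition closed_ultraprod (K : class) : Prop :=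
  forall (I : Type) (A : I -> algebra) U B,
    ultrafilter U -> (forall i, K (A i)) -> is_ultraproduct A U B -> K B.

Definition universal_class (K : class) : Prop :=
  [/\ closed_iso K, closed_sub K & closed_ultraprod K].

Definition Th (K : class) : theory :=
  fun phi => sentence phi /\ forall A, K A -> forall v : nat -> A, sat v phi.

Definition model_complete (T : theory) : Prop :=
  forall (M N : algebra) (e : M -> N), model T M -> model T N -> embedding e ->
    forall phi (v : nat -> M), sat v phi <-> sat (fun n => e (v n)) phi.

(* T* + diagram of M is complete: models of T* + diag(M) are exactly models N
   of T* together with an embedding e : M -> N (interpreting the new
   constants); a sentence of L(M) is a formula phi with parameters v from M. *)
Definition complete_with_diagram (T : theory) (M : algebra) : Prop :=
  forall phi (v : nat -> M),
    (forall (N : algebra) (e : M -> N), model T N -> embedding e ->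
        sat (fun n => e (v n)) phi) \/
    (forall (N : algebra) (e : M -> N), model T N -> embedding e ->
        ~ sat (fun n => e (v n)) phi).

Definition model_completion (Tstar T : theory) : Prop :=
  [/\ (forall phi, Tstar phi -> sentence phi),
      model_complete Tstar,
      (forall phi, universal phi -> sentence phi ->
          (consequence T phi <-> consequence Tstar phi)) &
      (forall M, model T M -> complete_with_diagram Tstar M)].

Definition has_model_completion (T : theory) : Prop :=
  exists Tstar, model_completion Tstar T.

Definition congruence (A : algebra) (theta : A -> A -> Prop) : Prop :=
  [/\ (forall a, theta a a),
      (forall a b, theta a b -> theta b a),
      (forall a b c, theta a b -> theta b c -> theta a c) &
      (forall f (x y : 'I_(arity f) -> A),
          (forall k, theta (x k) (y k)) -> theta (op f x) (op f y))].

Definition Cg (A : algebra) (b1 b2 : A) : A -> A -> Prop :=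
  fun a1 a2 => forall theta, congruence theta -> theta b1 b2 -> theta a1 a2.

(* Variables x1,x2,y1,y2 are the variables 0,1,2,3. *)
Definition agrees4 (A : Type) (v : nat -> A) (a1 a2 b1 b2 : A) : Prop :=
  [/\ v 0 = a1, v 1 = a2, v 2 = b1 & v 3 = b2].

(* parametrically definable principal congruences: the variables z are all
   the remaining (finitely many) variables of xi, universally quantified. *)
Definition param_def_pc (K : class) : Prop :=
  exists xi : formula, qfree xi /\
    forall (A : algebra), K A -> forall a1 a2 b1 b2 : A,
      Cg b1 b2 a1 a2 <->
      (forall (B : algebra) (e : A -> B), K B -> embedding e ->
         forall w : nat -> B, agrees4 w (e a1) (e a2) (e b1) (e b2) -> sat w xi).

Definition qf_def_pc (K : class) : Prop :=
  exists alpha : formula,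
    [/\ qfree alpha,
        (forall n, free_var alpha n -> n < 4) &
        forall (A : algebra), K A -> forall a1 a2 b1 b2 : A,
          Cg b1 b2 a1 a2 <->
          (forall w : nat -> A, agrees4 w a1 a2 b1 b2 -> sat w alpha)].

End FOL.

(* Main.v *)
Require Import Defs.
From mathcomp Require Import all_boot zify.
From mathcomp Require classical_sets filter.
From Stdlib Require Import Classical ClassicalEpsilon FunctionalExtensionality ProofIrrelevance PropExtensionality.
Set Implicit Arguments.
Unset Strict Implicit.
Unset Printing Implicit Defensive.

Section Basics.
Variable L : language.
Implicit Types (A B : algebra L) (phi : formula L) (t : term L).

Fixpoint term_ind2 (P : term L -> Prop) (HV : forall n, P (Var L n))
  (HA : forall f (args : 'I_(arity f) -> term L), (forall k, P (args k)) -> P (App args))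
  t : P t :=
  match t with
  | Var n => HV n
  | App f args => HA f args (fun k => term_ind2 HV HA (args k))
  end.

Lemma teval_hom A B (e : A -> B) (v : nat -> A) t :
  hom e -> teval (fun n => e (v n)) t = e (teval v t).
Proof.
move=> he; elim/term_ind2: t => [n|f args IH] //=.
rewrite he; congr op; apply: functional_extensionality => k; exact: IH.
Qed.

Lemma teval_ext A (v w : nat -> A) t :
  (forall n, term_occ t n -> v n = w n) -> teval v t = teval w t.
Proof.
elim/term_ind2: t => [n|f args IH] H /=; first by apply: H.
congr op; apply: functional_extensionality => k; apply: IH => n Hn.
by apply: H; exists k.
Qed.

Lemma sat_ext A phi : forall (v w : nat -> A),
  (forall n, free_var phi n -> v n = w n) -> (sat v phi <-> sat w phi).
Proof.
elim: phi => [t1 t2|| p IH | p IHp q IHq | p IHp q IHq | p IHp q IHq | m p IH | m p IH] v w H /=.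
- rewrite (@teval_ext _ v w t1) ?(@teval_ext _ v w t2) // => n Hn; apply: H.
    by right.
    by left.
- by [].
- by rewrite (IH v w H).
- by rewrite (IHp v w) ?(IHq v w) // => n Hn; apply: H; [right|left].
- by rewrite (IHp v w) ?(IHq v w) // => n Hn; apply: H; [right|left].
- by rewrite (IHp v w) ?(IHq v w) // => n Hn; apply: H; [right|left].
- have Hu a n : free_var p n -> upd v m a n = upd w m a n.
    rewrite /upd; case: eqP => // /eqP nm Hn; apply: H; split=> //; exact/eqP.
  by split=> Hs a; [rewrite -(IH _ _ (Hu a))|rewrite (IH _ _ (Hu a))].
- have Hu a n : free_var p n -> upd v m a n = upd w m a n.
    rewrite /upd; case: eqP => // /eqP nm Hn; apply: H; split=> //; exact/eqP.
  by split=> -[a Hs]; exists a; [rewrite -(IH _ _ (Hu a))|rewrite (IH _ _ (Hu a))].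
Qed.

Lemma upd_comp A B (e : A -> B) (v : nat -> A) n a :
  (fun m => e (upd v n a m)) = upd (fun m => e (v m)) n (e a).
Proof. by apply: functional_extensionality => m; rewrite /upd; case: eqP. Qed.

Lemma qf_embed A B (e : A -> B) (v : nat -> A) phi :
  embedding e -> qfree phi -> (sat v phi <-> sat (fun n => e (v n)) phi).
Proof.
move=> [he ie]; elim: phi => [t1 t2|| p IH | p IHp q IHq | p IHp q IHq | p IHp q IHq | m p IH | m p IH] //= Hq.
- rewrite !teval_hom //; split; [by move->| exact: ie].
- by rewrite IH.
- by case: Hq => /IHp -> /IHq ->.
- by case: Hq => /IHp -> /IHq ->.
- by case: Hq => /IHp -> /IHq ->.
Qed.

Lemma univ_down A B (e : A -> B) phi : embedding e -> universal phi ->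
  forall (v : nat -> A), sat (fun n => e (v n)) phi -> sat v phi.
Proof.
move=> he; elim=> [p Hq | n p _ IH] v /=.
- by move/(qf_embed v he Hq).
- by move=> H a; apply: IH; rewrite upd_comp; apply: H.
Qed.

Fixpoint foralls (l : seq nat) phi : formula L :=
  match l with [::] => phi | n :: l' => FAll n (foralls l' phi) end.

Lemma sat_foralls A l phi (v : nat -> A) :
  sat v (foralls l phi) <-> forall w, (forall n, n \notin l -> w n = v n) -> sat w phi.
Proof.
elim: l v => [|m l IH] v /=.
- split=> [H w Hw|H]; last by apply: H.
  by rewrite (sat_ext (w:=v)) // => n _; apply: Hw.
- split=> H.
  + move=> w Hw; apply: (proj1 (IH (upd v m (w m))) (H (w m))) => n Hn.
    rewrite /upd; case: eqP => [->//|/eqP nm]; apply: Hw.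
    by rewrite in_cons negb_or nm.
  + move=> a; apply/IH => w Hw; apply: H => n; rewrite in_cons negb_or => /andP[nm Hn].
    by rewrite Hw // /upd (negbTE nm).
Qed.

Lemma free_var_foralls l phi n : free_var (foralls l phi) n -> n \notin l /\ free_var phi n.
Proof.
elim: l => [|m l IH] //= [nm /IH [H1 H2]]; split=> //.
by rewrite in_cons negb_or H1 andbT; apply/eqP.
Qed.

Lemma universal_foralls l phi : qfree phi -> universal (foralls l phi).
Proof. by move=> H; elim: l => [|m l IH] /=; [constructor|constructor]. Qed.

Lemma Cg_hom A B (e : A -> B) (a1 a2 b1 b2 : A) : hom e ->
  Cg b1 b2 a1 a2 -> Cg (e b1) (e b2) (e a1) (e a2).
Proof.
move=> he H theta [r s t c] tb.
apply: (H (fun x y => theta (e x) (e y))) => //; split.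
- by move=> a; apply: r.
- by move=> a b; apply: s.
- by move=> a b d; apply: t.
- by move=> f x y Hxy; rewrite !he; apply: c.
Qed.

End Basics.

Module UF.
Import classical_sets filter.
Local Open Scope classical_set_scope.

Lemma uf_exists (I J : Type) (B : J -> I -> Prop) (j0 : J) :
  (forall j1 j2, exists j3, forall i, B j3 i -> B j1 i /\ B j2 i) ->
  (forall j, exists i, B j i) ->
  exists U : (I -> Prop) -> Prop, ultrafilter U /\ forall j, U (B j).
Proof.
move=> Hm Hne.
have FF : Filter (filter_from setT B).
  apply: filter_from_filter; first by exists j0.
  move=> j1 j2 _ _; have [j3 H3] := Hm j1 j2; exists j3 => //.
have PF : ProperFilter (filter_from setT B).
  apply: filter_from_proper => j _; have [i Hi] := Hne j; by exists i.
have [G [UG sub]] := ultraFilterLemma PF.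
exists G; split; last first.
  by move=> j; apply: sub; exists j => //.
have GF : ProperFilter G := ultra_proper.
split.
- exact: (@filterT _ G).
- move=> H; apply: (filter_not_empty G).
  by have -> : (set0 : set I) = (fun _ => False) by [].
- move=> S S' HS HSS'; exact: (filterS (F:=G) HSS' HS).
- move=> S S' HS HS'; exact: (filterI (F:=G) HS HS').
- move=> S; exact: (in_ultra_setVsetC S UG).
Qed.
End UF.

Section UFL.
Variable I : Type.
Variable U : (I -> Prop) -> Prop.
Hypothesis HU : ultrafilter U.

Lemma uT : U (fun _ => True). Proof. by case: HU. Qed.
Lemma uF : ~ U (fun _ => False). Proof. by case: HU. Qed.
Lemma uS (S S' : I -> Prop) : U S -> (forall i, S i -> S' i) -> U S'.
Proof. by case: HU => _ _ H _ _; apply: H. Qed.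
Lemma uI (S S' : I -> Prop) : U S -> U S' -> U (fun i => S i /\ S' i).
Proof. by case: HU => _ _ _ H _; apply: H. Qed.
Lemma uC (S : I -> Prop) : U S \/ U (fun i => ~ S i).
Proof. by case: HU => _ _ _ _ H; apply: H. Qed.
Lemma uAll (S : I -> Prop) : (forall i, S i) -> U S.
Proof. by move=> H; apply: uS uT _ => i _; apply: H. Qed.
Lemma uMP (S S' : I -> Prop) : U S -> U (fun i => S i -> S' i) -> U S'.
Proof. by move=> H1 H2; apply: uS (uI H1 H2) _ => i [a b]; apply: b. Qed.
Lemma uNot (S : I -> Prop) : ~ U S <-> U (fun i => ~ S i).
Proof.
split; first by case: (uC S).
move=> H1 H2; apply: uF; apply: uS (uI H1 H2) _ => i [a b]; exact: a b.
Qed.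
Lemma uFin n (S : 'I_n -> I -> Prop) : (forall k, U (S k)) -> U (fun i => forall k, S k i).
Proof.
move=> H.
suff: forall s : seq 'I_n, U (fun i => forall k, k \in s -> S k i).
  by move/(_ (enum 'I_n)) => H1; apply: uS H1 _ => i Hi k; apply: Hi; rewrite mem_enum.
elim=> [|k s IH]; first by apply: uAll.
apply: uS (uI (H k) IH) _ => i [h1 h2] k'; rewrite in_cons => /orP[/eqP->//|]; exact: h2.
Qed.
End UFL.

Lemma sig_eq (T : Type) (P : T -> Prop) (a b : {x | P x}) : proj1_sig a = proj1_sig b -> a = b.
Proof. by case: a => x hx; case: b => y hy /= Exy; subst y; rewrite (proof_irrelevance _ hx hy). Qed.

Section UP.
Variable L : language.
Variable I : Type.
Variable A : I -> algebra L.
Variable U : (I -> Prop) -> Prop.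
Hypothesis HU : ultrafilter U.

Definition prodT := forall i, A i.
Definition up_carrier := {P : prodT -> Prop | exists x : prodT, P = fun y => U (fun i => x i = y i)}.
Definition up_pi (x : prodT) : up_carrier :=
  exist _ (fun y => U (fun i => x i = y i)) (ex_intro _ x erefl).
Definition up_rep (c : up_carrier) : prodT :=
  proj1_sig (constructive_indefinite_description _ (proj2_sig c)).
Lemma up_repK c : up_pi (up_rep c) = c.
Proof.
apply: sig_eq => /=; rewrite /up_rep.
by case: (constructive_indefinite_description _ _) => x /= ->.
Qed.
Lemma up_ker x y : up_pi x = up_pi y <-> U (fun i => x i = y i).
Proof.
split=> [E|H].
- have := f_equal (@proj1_sig _ _) E => /= E1.
  have H : U (fun i => y i = y i) by apply: uAll.
  by move: (f_equal (fun P => P y) E1) => /= ->.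
- apply: sig_eq => /=; apply: functional_extensionality => z.
  apply: propositional_extensionality; split=> H2.
  + apply: (uS HU (uI HU H H2)) => i [e1 e2]; by rewrite -e1 e2.
  + apply: (uS HU (uI HU H H2)) => i [e1 e2]; by rewrite e1 e2.
Qed.
Definition up_op (f : sym L) (args : 'I_(arity f) -> up_carrier) : up_carrier :=
  up_pi (fun i => @op L (A i) f (fun k => up_rep (args k) i)).
Definition up_alg : algebra L := @Algebra L up_carrier up_op.

Lemma up_hop f (args : 'I_(arity f) -> prodT) :
  up_pi (fun i => @op L (A i) f (fun k => args k i)) = @op L up_alg f (fun k => up_pi (args k)).
Proof.
- rewrite /= /up_op; apply/up_ker.
  have H : forall k, U (fun i => args k i = up_rep (up_pi (args k)) i).
    by move=> k; apply/up_ker; rewrite up_repK.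
  apply: (uS HU (uFin HU H)) => i Hi /=.
  by congr (@op L (A i) f); apply: functional_extensionality.
Qed.

Lemma up_is : is_ultraproduct A U up_alg.
Proof.
exists up_pi; split.
- by move=> c; exists (up_rep c); rewrite up_repK.
- exact: up_ker.
- exact: up_hop.
Qed.
End UP.

Lemma upd_compT (X Y : Type) (e : X -> Y) (v : nat -> X) n a :
  (fun m => e (upd v n a m)) = upd (fun m => e (v m)) n (e a).
Proof. by apply: functional_extensionality => m; rewrite /upd; case: eqP. Qed.

Section Los.
Variable L : language.
Variable I : Type.
Variable A : I -> algebra L.
Variable U : (I -> Prop) -> Prop.
Hypothesis HU : ultrafilter U.
Hypothesis Hinh : forall i, inhabited (A i).
Variable B : algebra L.
Variable pi : (forall i, A i) -> B.
Hypothesis Hsurj : forall y : B, exists x, pi x = y.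
Hypothesis Hker : forall x y, pi x = pi y <-> U (fun i => x i = y i).
Hypothesis Hop : forall f (args : 'I_(arity f) -> forall i, A i),
  pi (fun i => @op L (A i) f (fun k => args k i)) = @op L B f (fun k => pi (args k)).

Lemma pick_prod (P : forall i, A i -> Prop) :
  exists x : forall i, A i, forall i, (exists a, P i a) -> P i (x i).
Proof.
have H : forall i, exists a, (exists b, P i b) -> P i a.
  move=> i; case: (classic (exists b, P i b)) => [[b Hb]|nH].
  - by exists b.
  - case: (Hinh i) => a; exists a => Hb; by case: nH.
exists (fun i => proj1_sig (constructive_indefinite_description _ (H i))) => i.
by case: (constructive_indefinite_description _ _).
Qed.

Lemma teval_up (v : nat -> forall i, A i) t :
  teval (fun n => pi (v n)) t = pi (fun i => teval (fun n => v n i) t).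
Proof.
elim/term_ind2: t => [n|f args IH] //=.
rewrite (Hop (fun k i => teval (fun n => v n i) (args k))).
by congr (@op L B f); apply: functional_extensionality => k; rewrite IH.
Qed.

Lemma upd_prod (v : nat -> forall i, A i) m x i :
  (fun n => upd v m x n i) = upd (fun n => v n i) m (x i).
Proof. by apply: functional_extensionality => n; rewrite /upd; case: eqP. Qed.

Lemma los phi : forall (v : nat -> forall i, A i),
  sat (fun n => pi (v n)) phi <-> U (fun i => sat (fun n => v n i) phi).
Proof.
elim: phi => [t1 t2|| p IH | p IHp q IHq | p IHp q IHq | p IHp q IHq | m p IH | m p IH] v /=.
- by rewrite !teval_up Hker.
- split=> // H; exact: (uF HU H).
- by rewrite IH uNot.
- rewrite IHp IHq; split=> [[h1 h2]|h]; first exact: uI.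
  by split; apply: (uS HU h) => i [].
- rewrite IHp IHq; split=> [[h|h]|h].
  + by apply: (uS HU h) => i; left.
  + by apply: (uS HU h) => i; right.
  + case: (uC HU (fun i => sat (fun n => v n i) p)) => h1; first by left.
    right; apply: (uS HU (uI HU h h1)) => i [[h2|h2] h3] //; by case: h3.
- rewrite IHp IHq; split=> h.
  + case: (uC HU (fun i => sat (fun n => v n i) p)) => h1.
    * by apply: (uS HU (h h1)) => i.
    * by apply: (uS HU h1) => i h2 h3.
  + by move=> h1; apply: (uMP HU h1).
- split=> h.
  + apply: NNPP => /(proj1 (uNot HU _)) h1.
    have [x Hx] := pick_prod (fun i a => ~ sat (upd (fun n => v n i) m a) p).
    have := h (pi x); rewrite -(upd_compT pi) IH => h2.
    apply: (uF HU); apply: (uS HU (uI HU h1 h2)) => i [h3 h4].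
    have /Hx : exists a, ~ sat (upd (fun n => v n i) m a) p by apply: NNPP => h5; apply: h3 => a; apply: NNPP => h6; apply: h5; exists a.
    by rewrite -upd_prod.
  + move=> b; have [x <-] := Hsurj b.
    rewrite -(upd_compT pi) IH; apply: (uS HU h) => i h1.
    by rewrite upd_prod.
- split=> [[b]|h].
  + have [x <-] := Hsurj b.
    rewrite -(upd_compT pi) IH => h1; apply: (uS HU h1) => i h2; exists (x i).
    by rewrite -upd_prod.
  + have [x Hx] := pick_prod (fun i a => sat (upd (fun n => v n i) m a) p).
    exists (pi x); rewrite -(upd_compT pi) IH; apply: (uS HU h) => i h1.
    by rewrite upd_prod; apply: Hx.
Qed.

Lemma pick_assign (v : nat -> B) : exists x : nat -> forall i, A i, forall n, pi (x n) = v n.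
Proof.
have H : forall n, exists y, pi y = v n by move=> n; apply: Hsurj.
exists (fun n => proj1_sig (constructive_indefinite_description _ (H n))) => n.
by case: (constructive_indefinite_description _ _).
Qed.

Lemma los_model (T : theory L) : (forall i, model T (A i)) -> model T B.
Proof.
move=> HM phi HT v.
have [x Hx] := pick_assign v.
have -> : v = (fun n => pi (x n)) by apply: functional_extensionality => n; rewrite Hx.
by apply/los; apply: uAll => // i; apply: HM.
Qed.
End Los.

Lemma in_In (T : eqType) (x : T) (s : seq T) : x \in s -> List.In x s.
Proof. elim: s => [|y s IH] //=; rewrite in_cons => /orP[/eqP->|/IH]; [by left|by right]. Qed.

Fixpoint cidx (T : Type) (x : T) (s : seq T) : nat :=
  match s with
  | [::] => 0
  | y :: s' => if excluded_middle_informative (x = y) then 0 else (cidx x s').+1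
  end.

Lemma cidx_le T (x : T) s : cidx x s <= size s.
Proof. elim: s => [|y s IH] //=; case: excluded_middle_informative => //. Qed.

Lemma cidx_nth T (x : T) s d : List.In x s -> List.nth (cidx x s) s d = x.
Proof.
elim: s => [|y s IH] //= H; case: excluded_middle_informative => [E|ne] /=; first by rewrite E.
by apply: IH; case: H => // E; case: ne.
Qed.

Section Diag.
Variable L : language.
Variable A : algebra L.

Inductive fact : Type :=
  | FOp (f : sym L) (args : 'I_(arity f) -> A)
  | FNe (x y : A).

Definition holds (M : algebra L) (h : A -> M) (F : fact) : Prop :=
  match F with
  | FOp f args => h (@op L A f args) = @op L M f (fun k => h (args k))
  | FNe x y => x <> y -> h x <> h y
  end.

Definition fact_elems (F : fact) : seq A :=
  match F with
  | FOp f args => @op L A f args :: map args (enum 'I_(arity f))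
  | FNe x y => [:: x; y]
  end.

Definition els (D : seq fact) : seq A := List.flat_map fact_elems D.

Definition fact_form (s : seq A) (F : fact) : formula L :=
  match F with
  | FOp f args => FEq (Var L (cidx (@op L A f args) s)) (App (fun k => Var L (cidx (args k) s)))
  | FNe x y => if excluded_middle_informative (x = y) then FNot (FFalse L)
               else FNot (FEq (Var L (cidx x s)) (Var L (cidx y s)))
  end.

Definition diag_form (s : seq A) (D : seq fact) : formula L :=
  foldr (fun F p => FAnd (fact_form s F) p) (FNot (FFalse L)) D.

Lemma sat_fact_form (M : algebra L) (w : nat -> M) s F :
  sat w (fact_form s F) <-> holds (fun x => w (cidx x s)) F.
Proof.
case: F => [f args|x y] /=; first by [].
case: excluded_middle_informative => [E|ne] /=; first by split=> // _ H; case: H.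
by split=> H; [move=> _|apply: H].
Qed.

Lemma sat_diag (M : algebra L) (w : nat -> M) s D :
  sat w (diag_form s D) <-> forall F, List.In F D -> holds (fun x => w (cidx x s)) F.
Proof.
elim: D => [|F D IH] /=; first by split=> [_ ? []|_ []].
rewrite sat_fact_form IH; split.
- move=> [h1 h2] F' [E|H]; first by rewrite -E.
  by apply: h2.
- move=> H; split; first by apply: H; left.
  by move=> F' HF; apply: H; right.
Qed.

Lemma holds_ext (M : algebra L) (h h' : A -> M) F :
  (forall x, List.In x (fact_elems F) -> h x = h' x) -> holds h F <-> holds h' F.
Proof.
case: F => [f args|x y] /= H.
- rewrite H; last by left.
  have -> : (fun k => h (args k)) = (fun k => h' (args k)).
    apply: functional_extensionality => k; apply: H; right.
    by apply: List.in_map; apply: in_In; rewrite mem_enum.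
  by [].
- by rewrite H ?(H y); [|right; left|left].
Qed.

Lemma qfree_diag s D : qfree (diag_form s D).
Proof.
elim: D => [|F D IH] //=; split=> //.
case: F => [f args|x y] //=; by case: excluded_middle_informative.
Qed.

Lemma free_diag s D n : free_var (diag_form s D) n -> n <= size s.
Proof.
elim: D => [|F D IH] //= [|/IH//].
case: F => [f args|x y] /=.
- by case=> [<-|[k <-]]; apply: cidx_le.
- case: excluded_middle_informative => _ //= [<-|<-]; apply: cidx_le.
Qed.

Definition sigma (D : seq fact) : formula L :=
  foldr (fun n p => FAll n p) (FNot (diag_form (els D) D)) (iota 0 (size (els D)).+1).

Lemma sigma_foralls D : sigma D = foralls (iota 0 (size (els D)).+1) (FNot (diag_form (els D) D)).
Proof. by rewrite /sigma; elim: (iota _ _) => //= n l ->. Qed.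

Lemma sigma_sentence D : sentence (sigma D).
Proof.
move=> n; rewrite sigma_foralls => /free_var_foralls [H1 /= /free_diag H2].
by move: H1; rewrite mem_iota /= add0n ltnS H2.
Qed.

Lemma sigma_universal D : universal (sigma D).
Proof. rewrite sigma_foralls; apply: universal_foralls => /=; exact: qfree_diag. Qed.

Lemma sigma_true (M : algebra L) D :
  (forall h : A -> M, ~ (forall F, List.In F D -> holds h F)) -> forall v : nat -> M, sat v (sigma D).
Proof.
move=> H v; rewrite sigma_foralls; apply/sat_foralls => w _ /=.
by move/sat_diag; apply: H.
Qed.

Lemma sigma_false (M : algebra L) (h : A -> M) (d : A) D :
  (forall F, List.In F D -> holds h F) -> exists v : nat -> M, ~ sat v (sigma D).
Proof.
move=> H; pose w n := h (List.nth n (els D) d).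
exists w; rewrite sigma_foralls => /sat_foralls /(_ w (fun _ _ => erefl)) /=; apply.
apply/sat_diag => F HF; apply/(holds_ext (h' := h)); last exact: H.
move=> x Hx; rewrite /w cidx_nth //.
by apply/List.in_flat_map; exists F.
Qed.

Lemma holds_id D : forall F, List.In F D -> holds (fun x : A => x) F.
Proof. by move=> [f args|x y] _. Qed.

Lemma DCL (C : class L)
  (Ccl : forall (M : seq fact -> algebra L) U B, ultrafilter U -> (forall i, C (M i)) ->
          is_ultraproduct M U B -> C B) :
  (forall D : seq fact, exists (M : algebra L) (h : A -> M), C M /\ forall F, List.In F D -> holds h F) ->
  exists (M : algebra L) (e : A -> M), C M /\ embedding e.
Proof.
move=> H.
pose Mf D := proj1_sig (constructive_indefinite_description _ (H D)).
have HM D : exists h : A -> Mf D, C (Mf D) /\ forall F, List.In F D -> holds h F.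
  by rewrite /Mf; case: (constructive_indefinite_description _ _).
pose hf D := proj1_sig (constructive_indefinite_description _ (HM D)).
have Hh D : C (Mf D) /\ forall F, List.In F D -> holds (hf D) F.
  by rewrite /hf; case: (constructive_indefinite_description _ _).
pose Bs (D0 D : seq fact) := forall F, List.In F D0 -> List.In F D.
have [U [HU HUB]] : exists U : (seq fact -> Prop) -> Prop, ultrafilter U /\ forall D0, U (Bs D0).
  apply: (UF.uf_exists [::]).
  - move=> D1 D2; exists (D1 ++ D2) => D HD; split=> F HF; apply: HD; apply/List.in_app_iff; by [left|right].
  - by move=> D0; exists D0.
exists (up_alg Mf U), (fun x => up_pi (A:=Mf) U (fun D => hf D x)); split.
  apply: (Ccl Mf U) => //; [by move=> D; case: (Hh D)|exact: up_is HU].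
split.
- move=> f args; rewrite -(up_hop HU); apply/(up_ker HU).
  apply: (uS HU (HUB [:: FOp args])) => D HD.
  by case: (Hh D) => _ /(_ (FOp args)); apply; apply: HD; left.
- move=> x y /(up_ker HU) Hxy; apply: NNPP => ne.
  apply: (uF HU); apply: (uS HU (uI HU Hxy (HUB [:: FNe x y]))) => D [E HD].
  by case: (Hh D) => _ /(_ (FNe x y)) /(_ (HD _ (or_introl erefl)) ne).
Qed.
End Diag.

Section UPlos.
Variable L : language.
Variable I : Type.
Variable A : I -> algebra L.
Variable U : (I -> Prop) -> Prop.
Hypothesis HU : ultrafilter U.
Hypothesis Hinh : forall i, inhabited (A i).

Lemma los_up phi (v : nat -> forall i, A i) :
  sat (fun n => up_pi U (v n) : up_alg A U) phi <-> U (fun i => sat (fun n => v n i) phi).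
Proof.
apply: (los HU Hinh (B := up_alg A U)).
- by move=> c; exists (up_rep c); rewrite up_repK.
- exact: up_ker.
- exact: up_hop.
Qed.

Lemma los_model_up (T : theory L) : (forall i, model T (A i)) -> model T (up_alg A U).
Proof.
apply: (los_model HU Hinh (B := up_alg A U) (pi := up_pi U)).
- by move=> c; exists (up_rep c); rewrite up_repK.
- exact: up_ker.
- exact: up_hop.
Qed.
End UPlos.

Section Bounds.
Variable L : language.

Lemma le_foldr_max (x : nat) s : x \in s -> x <= foldr maxn 0 s.
Proof.
elim: s => [|y s IH] //=; rewrite in_cons => /orP[/eqP->|/IH H]; first exact: leq_maxl.
exact: leq_trans H (leq_maxr _ _).
Qed.

Fixpoint tbound (t : term L) : nat :=
  match t with
  | Var n => n.+1
  | App f args => foldr maxn 0 (map (fun k => tbound (args k)) (enum 'I_(arity f)))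
  end.

Lemma tbound_occ t n : term_occ t n -> n < tbound t.
Proof.
elim/term_ind2: t => [m|f args IH] /=; first by move->.
case=> k /IH H; apply: leq_trans H _; apply: le_foldr_max.
by apply/mapP; exists k; rewrite ?mem_enum.
Qed.

Fixpoint fbound (phi : formula L) : nat :=
  match phi with
  | FEq t1 t2 => maxn (tbound t1) (tbound t2)
  | FFalse => 0
  | FNot p => fbound p
  | FAnd p q | FOr p q | FImp p q => maxn (fbound p) (fbound q)
  | FAll _ p | FEx _ p => fbound p
  end.

Lemma fbound_free phi n : free_var phi n -> n < fbound phi.
Proof.
elim: phi => [t1 t2|| p IH | p IHp q IHq | p IHp q IHq | p IHp q IHq | m p IH | m p IH] //=.
- case=> /tbound_occ H; [exact: leq_trans H (leq_maxl _ _)|exact: leq_trans H (leq_maxr _ _)].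
- case=> [/IHp H|/IHq H]; [exact: leq_trans H (leq_maxl _ _)|exact: leq_trans H (leq_maxr _ _)].
- case=> [/IHp H|/IHq H]; [exact: leq_trans H (leq_maxl _ _)|exact: leq_trans H (leq_maxr _ _)].
- case=> [/IHp H|/IHq H]; [exact: leq_trans H (leq_maxl _ _)|exact: leq_trans H (leq_maxr _ _)].
- by case=> _ /IH.
- by case=> _ /IH.
Qed.

Definition phiU (xi : formula L) := foralls (iota 4 (fbound xi - 4)) xi.

Lemma phiU_free xi n : free_var (phiU xi) n -> n < 4.
Proof.
move=> /free_var_foralls [H1 /fbound_free H2]; move: H1; rewrite mem_iota.
apply: contraR; rewrite -leqNgt => H; apply/andP; split=> //; lia.
Qed.

Lemma phiU_sat xi (M : algebra L) (v : nat -> M) :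
  sat v (phiU xi) <-> forall w, (forall n, n < 4 -> w n = v n) -> sat w xi.
Proof.
rewrite /phiU sat_foralls; split=> H w Hw.
- pose w' n := if n < fbound xi then w n else v n.
  have : sat w' xi.
    apply: H => n; rewrite mem_iota /w' negb_and -!leqNgt.
    case: ltnP => // Hn /orP[H4|H4]; [apply: Hw; lia|lia].
  have E : forall n, free_var xi n -> w' n = w n by move=> n /fbound_free Hn; rewrite /w' Hn.
  by move/(sat_ext E).
- apply: H => n Hn; apply: Hw; rewrite mem_iota negb_and -!leqNgt in Hn *; lia.
Qed.
End Bounds.

Section Main.
Variable L : language.
Variable K : class L.
Hypothesis Hc : exists c : sym L, arity c = 0.
Hypothesis HK : universal_class K.
Variable Tstar : theory L.
Hypothesis HMC : model_completion Tstar (Th K).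

Lemma alg_inh (A : algebra L) : inhabited A.
Proof.
case: Hc => c Hc0; constructor; apply: (@op L A c) => k.
exfalso; have := ltn_ord k; move: (nat_of_ord k) => m; by rewrite Hc0.
Qed.

Lemma KTh (A : algebra L) : K A -> model (Th K) A.
Proof. by move=> HA phi [_ H] v; apply: H. Qed.

Lemma Huniv phi : universal phi -> sentence phi -> consequence (Th K) phi -> consequence Tstar phi.
Proof. by case: HMC => _ _ H _ Hu Hs; exact: (proj1 (H _ Hu Hs)). Qed.

Lemma Huniv' phi : universal phi -> sentence phi -> consequence Tstar phi -> consequence (Th K) phi.
Proof. by case: HMC => _ _ H _ Hu Hs; exact: (proj2 (H _ Hu Hs)). Qed.

Lemma F3 (N : algebra L) : model Tstar N -> K N.
Proof.
move=> HN.
have [d] := alg_inh N.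
case: HK => Hiso Hsub Hup.
have [M [e [KM He]]] : exists (M : algebra L) (e : N -> M), K M /\ embedding e.
  apply: (DCL (C := K)).
    by move=> Mf U B HU HM Hi; apply: (Hup _ Mf U B).
  move=> D; apply: NNPP => H.
  have Hs : Th K (sigma D).
    split; first exact: sigma_sentence.
    move=> A HA v; apply: sigma_true => h Hh; apply: H; exists A, h; by split.
  have := Huniv (@sigma_universal _ _ D) (@sigma_sentence _ _ D) (fun A HA v => HA _ Hs v).
  have [v Hv] := sigma_false d (holds_id (D := D)).
  by move=> /(_ N HN v).
exact: Hsub M e KM He.
Qed.

Lemma Tstar_up (A : algebra L) (Mf : seq (fact A) -> algebra L) U B :
  ultrafilter U -> (forall i, model Tstar (Mf i)) -> is_ultraproduct Mf U B -> model Tstar B.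
Proof.
move=> HU HM [pi [Hs Hk Ho]].
apply: (los_model HU (fun i => alg_inh (Mf i)) Hs Hk Ho HM).
Qed.

Lemma F2 (A : algebra L) : K A -> exists (N : algebra L) (e : A -> N), model Tstar N /\ embedding e.
Proof.
move=> HA.
have [d] := alg_inh A.
apply: (DCL (C := model Tstar)).
  by move=> Mf U B HU HM Hi; apply: (Tstar_up HU HM Hi).
move=> D; apply: NNPP => H.
have Hs : consequence Tstar (sigma D).
  move=> M HM v; apply: sigma_true => h Hh; apply: H; exists M, h; by split.
have := Huniv' (@sigma_universal _ _ D) (@sigma_sentence _ _ D) Hs.
have [v Hv] := sigma_false d (holds_id (D := D)).
by move=> /(_ A (KTh HA) v).
Qed.
End Main.

Section Main2.
Variable L : language.
Variable K : class L.
Hypothesis Hc : exists c : sym L, arity c = 0.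
Hypothesis HK : universal_class K.
Variable Tstar : theory L.
Hypothesis HMC : model_completion Tstar (Th K).
Variable xi : formula L.

Definition QT (th : formula L) := qfree th /\ (forall n, free_var th n -> n < 4).
Definition good (t : term L) := forall n, term_occ t n -> n < 4.
Definition gm (n : nat) := if n < 4 then n else 0.
Lemma gm_lt n : gm n < 4. Proof. by rewrite /gm; case: ifP. Qed.
Lemma gm_eq n : n < 4 -> gm n = n. Proof. by rewrite /gm => ->. Qed.

Section Sep.
Variables (N1 N2 : algebra L) (a1 : nat -> N1) (a2 : nat -> N2).
Hypothesis HN1 : model Tstar N1.
Hypothesis HN2 : model Tstar N2.
Hypothesis Heq : forall th, QT th -> (sat a1 th <-> sat a2 th).

Definition Ccar := {x : N1 | exists t, good t /\ x = teval a1 t}.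

Lemma Cop_ex f (args : 'I_(arity f) -> Ccar) :
  exists t, good t /\ @op L N1 f (fun k => proj1_sig (args k)) = teval a1 t.
Proof.
have H k : exists t, good t /\ proj1_sig (args k) = teval a1 t := proj2_sig (args k).
pose tk k := proj1_sig (constructive_indefinite_description _ (H k)).
have Htk k : good (tk k) /\ proj1_sig (args k) = teval a1 (tk k).
  by rewrite /tk; case: (constructive_indefinite_description _ _).
exists (App tk); split.
- by move=> n /= [k]; apply: (Htk k).1.
- rewrite /=; congr (@op L N1 f); apply: functional_extensionality => k; exact: (Htk k).2.
Qed.

Definition Cop f (args : 'I_(arity f) -> Ccar) : Ccar := exist _ _ (Cop_ex args).
Definition Calg : algebra L := @Algebra L Ccar Cop.

Definition ctm (x : Ccar) : term L := proj1_sig (constructive_indefinite_description _ (proj2_sig x)).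
Lemma ctm_spec x : good (ctm x) /\ proj1_sig x = teval a1 (ctm x).
Proof. by rewrite /ctm; case: (constructive_indefinite_description _ _). Qed.

Lemma wd t t' : good t -> good t' -> (teval a1 t = teval a1 t' <-> teval a2 t = teval a2 t').
Proof.
move=> g g'; apply: (Heq (th := FEq t t')); split=> // n /= [/g|/g'] //.
Qed.

Definition e2 (x : Ccar) : N2 := teval a2 (ctm x).

Lemma emb1 : embedding (fun x : Calg => proj1_sig x).
Proof. split=> // x y; exact: sig_eq. Qed.

Lemma emb2 : embedding (e2 : Calg -> N2).
Proof.
split.
- move=> f args.
  have -> : @op L N2 f (fun k => e2 (args k)) = teval a2 (App (fun k => ctm (args k))) by [].
  rewrite /e2; apply/wd; first exact: (ctm_spec _).1.
    by move=> n /= [k]; apply: (ctm_spec _).1.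
  rewrite -(ctm_spec _).2 /=; congr (@op L N1 f); apply: functional_extensionality => k.
  exact: (ctm_spec _).2.
- move=> x y; rewrite /e2 => /wd E; apply: sig_eq; rewrite (ctm_spec x).2 (ctm_spec y).2.
  by apply: E; apply: (ctm_spec _).1.
Qed.

Lemma good_gm n : good (Var L (gm n)).
Proof. by move=> k /= <-; apply: gm_lt. Qed.

Definition vC (n : nat) : Calg :=
  exist _ (a1 (gm n)) (ex_intro _ (Var L (gm n)) (conj (@good_gm n) erefl)).

Lemma e2_vC n : e2 (vC n) = a2 (gm n).
Proof.
rewrite /e2; have := wd (t := ctm (vC n)) (t' := Var L (gm n)) (ctm_spec _).1.
move=> H; apply/H => /=; first by move=> k <-; apply: gm_lt.
by rewrite -(ctm_spec _).2.
Qed.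

Lemma sep : sat a1 (phiU xi) <-> sat a2 (phiU xi).
Proof.
have KC : K Calg.
  case: HK => _ Hsub _; apply: (Hsub _ _ _ (F3 Hc HK HMC HN1) emb1).
case: HMC => _ _ _ Hcomp.
have E1 : sat a1 (phiU xi) <-> sat (fun n => proj1_sig (vC n)) (phiU xi).
  by apply: sat_ext => n /phiU_free Hn /=; rewrite gm_eq.
have E2 : sat a2 (phiU xi) <-> sat (fun n => e2 (vC n)) (phiU xi).
  by apply: sat_ext => n /phiU_free Hn /=; rewrite e2_vC gm_eq.
rewrite E1 E2.
case: (Hcomp Calg (KTh KC) (phiU xi) vC) => H.
- by split=> _; [apply: H HN2 emb2|apply: H HN1 emb1].
- by split=> Hs; [case: (H _ _ HN1 emb1)|case: (H _ _ HN2 emb2)].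
Qed.
End Sep.
End Main2.

Section Main3.
Variable L : language.
Variable K : class L.
Hypothesis Hc : exists c : sym L, arity c = 0.
Hypothesis HK : universal_class K.
Variable Tstar : theory L.
Hypothesis HMC : model_completion Tstar (Th K).
Variable xi : formula L.

Notation phi := (phiU xi).

Lemma QT_and (p q : formula L) : QT p -> QT q -> QT (FAnd p q).
Proof. by move=> [h1 h2] [h3 h4]; split=> // n /= [/h2|/h4]. Qed.
Lemma QT_or (p q : formula L) : QT p -> QT q -> QT (FOr p q).
Proof. by move=> [h1 h2] [h3 h4]; split=> // n /= [/h2|/h4]. Qed.
Lemma QT_not (p : formula L) : QT p -> QT (FNot p).
Proof. by move=> [h1 h2]; split. Qed.
Lemma QT_false : QT (FFalse L).
Proof. by split. Qed.

Lemma stepA (N : algebra L) (a : nat -> N) : model Tstar N -> sat a phi ->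
  exists th, [/\ QT th, sat a th &
    forall (M : algebra L) (b : nat -> M), model Tstar M -> ~ sat b phi -> ~ sat b th].
Proof.
move=> HN Ha; apply: NNPP => H.
have H' : forall th, QT th -> sat a th ->
    exists (M : algebra L) (b : nat -> M), [/\ model Tstar M, ~ sat b phi & sat b th].
  move=> th q s; apply: NNPP => H2; apply: H; exists th; split=> // M b HM Hb Hth.
  by apply: H2; exists M, b.
pose Ix := {th : formula L | QT th /\ sat a th}.
pose Mf (i : Ix) := proj1_sig (constructive_indefinite_description _
                       (H' _ (proj1 (proj2_sig i)) (proj2 (proj2_sig i)))).
have HM i : exists b : nat -> Mf i, [/\ model Tstar (Mf i), ~ sat b phi & sat b (proj1_sig i)].
  by rewrite /Mf; case: (constructive_indefinite_description _ _).
pose bf i := proj1_sig (constructive_indefinite_description _ (HM i)).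
have Hb i : [/\ model Tstar (Mf i), ~ sat (bf i) phi & sat (bf i) (proj1_sig i)].
  by rewrite /bf; case: (constructive_indefinite_description _ _).
pose Bs (j i : Ix) := sat (bf i) (proj1_sig j).
have j0 : Ix by exists (FNot (FFalse L)); split; [apply: QT_not; apply: QT_false|by []].
have [U [HU HUB]] : exists U : (Ix -> Prop) -> Prop, ultrafilter U /\ forall j, U (Bs j).
  apply: (UF.uf_exists j0).
  - move=> [p [qp sp]] [q [qq sq]].
    exists (exist _ (FAnd p q) (conj (QT_and qp qq) (conj sp sq))) => i.
    by rewrite /Bs /=.
  - by move=> j; exists j; rewrite /Bs; case: (Hb j).
have Hinh i := alg_inh Hc (Mf i).
pose bs : nat -> up_alg Mf U := fun n => up_pi (A := Mf) U (fun i => bf i n).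
have HB : model Tstar (up_alg Mf U).
  by apply: los_model_up => // i; case: (Hb i).
have Hnb : ~ sat bs phi.
  have : sat bs (FNot phi).
    by apply: (proj2 (los_up HU Hinh _ (fun n i => bf i n))); apply: uAll => // i; case: (Hb i).
  by [].
have Heq : forall th, QT th -> (sat a th <-> sat bs th).
  move=> th qth; split=> Hth.
  - apply: (proj2 (los_up HU Hinh _ (fun n i => bf i n))); exact: (HUB (exist _ th (conj qth Hth))).
  - apply: NNPP => Hn.
    have : sat bs (FNot th).
      apply: (proj2 (los_up HU Hinh _ (fun n i => bf i n))); exact: (HUB (exist _ (FNot th) (conj (QT_not qth) Hn))).
    by [].
by apply: Hnb; apply/(sep Hc HK HMC xi HN HB Heq).
Qed.

Lemma stepB : exists al, QT al /\
  forall (N : algebra L) (a : nat -> N), model Tstar N -> (sat a phi <-> sat a al).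
Proof.
apply: NNPP => H.
pose D th := QT th /\ forall (M : algebra L) (b : nat -> M), model Tstar M -> ~ sat b phi -> ~ sat b th.
have H' : forall th, D th ->
    exists (N : algebra L) (a : nat -> N), [/\ model Tstar N, sat a phi & ~ sat a th].
  move=> th [q Hd]; apply: NNPP => H2; apply: H; exists th; split; first exact: q.
  move=> N a HN; split.
  - move=> Ha; apply: NNPP => Hn; apply: H2; exists N, a; by split.
  - by move=> Hth; apply: NNPP => Hn; apply: (Hd N a HN Hn).
pose Ix := {th : formula L | D th}.
pose Mf (i : Ix) := proj1_sig (constructive_indefinite_description _ (H' _ (proj2_sig i))).
have HM i : exists b : nat -> Mf i, [/\ model Tstar (Mf i), sat b phi & ~ sat b (proj1_sig i)].
  by rewrite /Mf; case: (constructive_indefinite_description _ _).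
pose bf i := proj1_sig (constructive_indefinite_description _ (HM i)).
have Hb i : [/\ model Tstar (Mf i), sat (bf i) phi & ~ sat (bf i) (proj1_sig i)].
  by rewrite /bf; case: (constructive_indefinite_description _ _).
pose Bs (j i : Ix) := ~ sat (bf i) (proj1_sig j).
have j0 : Ix.
  exists (FFalse L); rewrite /D; split; first exact: QT_false.
  by move=> M b _ _.
have [U [HU HUB]] : exists U : (Ix -> Prop) -> Prop, ultrafilter U /\ forall j, U (Bs j).
  apply: (UF.uf_exists j0).
  - move=> [p [qp dp]] [q [qq dq]].
    have Dpq : D (FOr p q).
      split; first exact: QT_or.
      by move=> M b HM0 Hb0 /= [/(dp M b HM0 Hb0)|/(dq M b HM0 Hb0)].
    exists (exist _ (FOr p q) Dpq) => i; rewrite /Bs /= => Hn.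
    by split=> Hs; apply: Hn; [left|right].
  - by move=> j; exists j; rewrite /Bs; case: (Hb j).
have Hinh i := alg_inh Hc (Mf i).
pose bs : nat -> up_alg Mf U := fun n => up_pi (A := Mf) U (fun i => bf i n).
have HB : model Tstar (up_alg Mf U).
  by apply: los_model_up => // i; case: (Hb i).
have Hpb : sat bs phi.
  by apply: (proj2 (los_up HU Hinh _ (fun n i => bf i n))); apply: uAll => // i; case: (Hb i).
have [th [qth sth Dth]] := stepA HB Hpb.
have : sat bs (FNot th).
  apply: (proj2 (los_up HU Hinh _ (fun n i => bf i n))); exact: (HUB (exist _ th (conj qth Dth))).
by [].
Qed.
End Main3.

Definition tup4 (X : Type) (x1 x2 x3 x4 : X) (n : nat) : X :=
  match n with 0 => x1 | 1 => x2 | 2 => x3 | _ => x4 end.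

Lemma agrees4_iff (X : Type) (w : nat -> X) x1 x2 x3 x4 :
  agrees4 w x1 x2 x3 x4 <-> forall n, n < 4 -> w n = tup4 x1 x2 x3 x4 n.
Proof.
split=> [[h0 h1 h2 h3] [|[|[|[|n]]]] //|H].
by split; [apply: (H 0)|apply: (H 1)|apply: (H 2)|apply: (H 3)].
Qed.

Lemma tup4_map (X Y : Type) (e : X -> Y) x1 x2 x3 x4 n :
  tup4 (e x1) (e x2) (e x3) (e x4) n = e (tup4 x1 x2 x3 x4 n).
Proof. by case: n => [|[|[|[|n]]]]. Qed.

Lemma embedding_comp (L : language) (A B C : algebra L) (f : A -> B) (g : B -> C) :
  embedding f -> embedding g -> embedding (fun x => g (f x)).
Proof.
move=> [hf if_] [hg ig]; split.
- by move=> s args; rewrite hf hg.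
- by move=> x y /ig /if_.
Qed.

Lemma embedding_id (L : language) (A : algebra L) : embedding (fun x : A => x).
Proof. by split. Qed.

Theorem proposition5p1 (L : language) (K : class L) :
  (exists c : sym L, arity c = 0) ->
  universal_class K ->
  param_def_pc K ->
  has_model_completion (Th K) ->
  qf_def_pc K.
Proof.
move=> Hc HK [xi [qxi Hxi]] [Tstar HMC].
have [al [[qal fal] Hal]] := stepB Hc HK HMC xi.
exists al; split=> // A HA a1 a2 b1 b2.
pose tp := tup4 a1 a2 b1 b2.
have [N [e [HN He]]] := F2 Hc HMC HA.
have KN := F3 Hc HK HMC HN.
have key : Cg b1 b2 a1 a2 <-> sat (fun n => e (tp n)) (phiU xi).
  split=> H.
  - have H1 := Cg_hom He.1 H.
    have := proj1 (Hxi N KN (e a1) (e a2) (e b1) (e b2)) H1 N (fun x => x) KN (embedding_id N).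
    move=> H2; apply/phiU_sat => w Hw; apply: H2; apply/agrees4_iff => n Hn.
    by rewrite Hw // tup4_map.
  - apply/(Hxi A HA) => B e' KB He' w Hw.
    have [N' [g [HN' Hg]]] := F2 Hc HMC KB.
    case: HMC => _ _ _ Hcomp.
    case: (Hcomp A (KTh HA) (phiU xi) tp) => Hall; last first.
      by case: (Hall N e HN He).
    have := Hall N' (fun x => g (e' x)) HN' (embedding_comp He' Hg).
    move/(univ_down Hg (universal_foralls _ qxi)) => /phiU_sat; apply.
    by move=> n Hn; move/agrees4_iff: Hw => ->; rewrite // tup4_map.
rewrite key (Hal N _ HN) -(qf_embed tp He qal).
split.
- move=> H w Hw; have E : forall n, free_var al n -> w n = tp n.
    by move=> n /fal Hn; move/agrees4_iff: Hw => ->.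
  exact: (proj2 (sat_ext E) H).
- move=> H; apply: H; apply/agrees4_iff => n Hn; done.
Qed.
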